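(* Let $G=(V,E,\{c_e\}_{e\in E})$ be a finite undirected graph with positive conductances and arbitrarily oriented edges. Let $h\in\mathbb{R}^V_{>0}$ and $w\in\mathbb{R}^E_{\ge0}$. Then $$\left(w^\top C^{1/2}|Bh|\right)^2\le\frac{\mathcal{I}(h)}{2}\sum_{x\in V}h(x)\sum_{e:\,x\in e}w_e^2,$$ where $|Bh|$ denotes the coordinatewise absolute value of $Bh$ and $$\mathcal{I}(h):=h^\top L\log h=\sum_{xy\in E}c_{xy}\big(h(x)-h(y)\big)\big(\log h(x)-\log h(y)\big),$$ with $\log h$ taken coordinatewise.
   Context: For a vertex $v$, $\mathbbm{1}_v\in\mathbb{R}^V$ is the standard basis vector. For an edge $e$ oriented from $e^-$ to $e^+$, $b_e:=\mathbbm{1}_{e^+}-\mathbbm{1}_{e^-}$; $B\in\mathbb{R}^{E\times V}$ is the matrix with row $b_e^\top$ for each $e$. $C=\operatorname{diag}(c_e)$, $L:=B^\top CB$. Graphs have no self-loops. *)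

(* Defs.v *)
From HB Require Import structures.
From mathcomp Require Import all_boot all_order all_algebra.
From mathcomp Require Import all_classical all_reals all_analysis.
Set Implicit Arguments. Unset Strict Implicit. Unset Printing Implicit Defensive.
Import Order.TTheory GRing.Theory Num.Theory.
Local Open Scope ring_scope.

(* Graph: vertices 'I_n, edges 'I_m; edge e oriented from tl e to hd e. *)

Definition incidence (R : realType) (n m : nat) (tl hd : 'I_m -> 'I_n)
  : 'M[R]_(m, n) :=
  \matrix_(e < m, v < n) ((v == hd e)%:R - (v == tl e)%:R).

Definition condmx (R : realType) (m : nat) (c : 'I_m -> R) : 'M[R]_m :=
  diag_mx (\row_e c e).

Definition condmx_sqrt (R : realType) (m : nat) (c : 'I_m -> R) : 'M[R]_m :=
  diag_mx (\row_e Num.sqrt (c e)).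

Definition laplacian (R : realType) (n m : nat) (tl hd : 'I_m -> 'I_n)
  (c : 'I_m -> R) : 'M[R]_n :=
  (incidence R tl hd)^T *m condmx c *m incidence R tl hd.

Definition entropy_I (R : realType) (n m : nat) (tl hd : 'I_m -> 'I_n)
  (c : 'I_m -> R) (h : 'cV[R]_n) : R :=
  (h^T *m laplacian tl hd c *m map_mx (@ln R) h) ord0 ord0.

(* Main.v *)
Require Import Defs.
From HB Require Import structures.
From mathcomp Require Import all_boot all_order all_algebra.
From mathcomp Require Import all_classical all_reals all_analysis.
Import Order.TTheory GRing.Theory Num.Theory.
Local Open Scope ring_scope.
From mathcomp Require Import ring lra.

Lemma key_aux (R : realType) (a b : R) : 0 < b -> b <= a ->
  2 * (a - b) <= (ln a - ln b) * (a + b).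
Proof.
move=> b0 ba.
pose g := (fun x : R => (ln x - ln b) * (x + b) - 2 * (x - b)).
pose dg := (fun x : R => (ln x - ln b) + (x + b) / x - 2).
have hd : forall x : R, 0 < x -> is_derive x 1 g (dg x).
  move=> x x0 /=.
  have H1 : is_derive x 1 (fun y : R => ln y - ln b) x^-1.
    have := is_deriveB (is_derive1_ln x0) (is_derive_cst (ln b) x 1).
    by rewrite subr0.
  have H2 : is_derive x 1 (fun y : R => y + b) 1.
    have := is_deriveD (is_derive_id x 1) (is_derive_cst b x 1).
    by rewrite addr0.
  have H3 : is_derive x 1 (fun y : R => 2 * (y - b)) 2.
    have := is_deriveB (is_derive_id x 1) (is_derive_cst b x 1).
    rewrite subr0 => H.
    have := is_deriveZ 2 H. by rewrite /GRing.scale /= mulr1.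
  have := is_deriveB (is_deriveM H1 H2) H3.
  rewrite /dg /GRing.scale /= mulr1 => H.
  exact: H.
have [c cin E] : exists2 c, c \in `[b, a]%R & g a - g b = dg c * (a - b).
  apply: MVT_segment => //.
    move=> x; rewrite in_itv /= => /andP[bx _]; apply: hd; exact: lt_trans bx.
  apply: derivable_within_continuous => x; rewrite in_itv /= => /andP[bx _].
  have H := hd x (lt_le_trans b0 bx). by case: H.
move: cin; rewrite in_itv /= => /andP[bc ca].
have c0 : 0 < c by exact: lt_le_trans b0 bc.
have gb : g b = 0 by rewrite /g !subrr mul0r mulr0 subrr.
have hdg : 0 <= dg c.
  have bc0 : 0 < b / c by rewrite divr_gt0.
  have := @le_ln1Dx R (b / c - 1).
  have -> : 1 + (b / c - 1) = b / c by ring.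
  rewrite ln_div ?posrE // => /(_ ltac:(lra)) hl.
  rewrite /dg mulrDl divff ?gt_eqF //. lra.
have : 0 <= g a.
  have : 0 <= dg c * (a - b) by apply: mulr_ge0 => //; lra.
  lra.
rewrite /g. lra.
Qed.

Lemma key_sym (R : realType) (a b : R) : 0 < a -> 0 < b ->
  2 * (a - b) ^+ 2 <= (a - b) * (ln a - ln b) * (a + b).
Proof.
move=> a0 b0; case: (leP b a) => ab.
  have := @key_aux R a b b0 ab; have : 0 <= a - b by lra. nra.
have := @key_aux R b a a0 (ltW ab); have : 0 <= b - a by lra. nra.
Qed.

Lemma amgm_aux (R : realType) (t u v : R) : 0 <= u -> 0 <= v ->
  t ^+ 2 <= u * v -> 2 * t <= u + v.
Proof.
move=> u0 v0 h; case: (leP (2 * t) (u + v)) => // hlt.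
have h2 : (u + v) * (u + v) < (2 * t) * (2 * t).
  apply: (@le_lt_trans _ _ ((u + v) * (2 * t))).
    apply: ler_wpM2l; lra.
  rewrite ltr_pM2r; lra.
have : 0 <= (u - v) ^+ 2 by exact: sqr_ge0.
move: h h2; rewrite !expr2 => h h2. nra.
Qed.

Lemma cs_aux (R : realType) (m : nat) (x p q : 'I_m -> R) :
  (forall e, 0 <= p e) -> (forall e, 0 <= q e) ->
  (forall e, x e ^+ 2 <= p e * q e) ->
  (\sum_e x e) ^+ 2 <= (\sum_e p e) * (\sum_e q e).
Proof.
move=> p0 q0 hx.
have E : (\sum_e p e) * (\sum_e q e) =
  \sum_e \sum_f ((p e * q f + p f * q e) / 2).
  have A : \sum_e \sum_f (p e * q f) = (\sum_e p e) * (\sum_e q e).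
    by rewrite mulr_suml; apply: eq_bigr => e _; rewrite mulr_sumr.
  have B : \sum_e \sum_f (p f * q e) = (\sum_e p e) * (\sum_e q e).
    by rewrite exchange_big.
  transitivity ((\sum_e \sum_f (p e * q f) + \sum_e \sum_f (p f * q e)) / 2).
    by rewrite A B; field.
  rewrite -big_split mulr_suml; apply: eq_bigr => e _.
  by rewrite -big_split mulr_suml.
rewrite E expr2 mulr_suml; apply: ler_sum => e _; rewrite mulr_sumr.
apply: ler_sum => f _.
have h1 : (x e * x f) ^+ 2 <= (p e * q f) * (p f * q e).
  rewrite exprMn.
  have := hx e; have := hx f.
  have : 0 <= x e ^+ 2 by exact: sqr_ge0.
  have : 0 <= x f ^+ 2 by exact: sqr_ge0.
  move=> a b c d.
  have -> : p e * q f * (p f * q e) = (p e * q e) * (p f * q f) by ring.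
  apply: ler_pM => //.
have := @amgm_aux R _ _ _ (mulr_ge0 (p0 e) (q0 f)) (mulr_ge0 (p0 f) (q0 e)) h1.
lra.
Qed.

Lemma sum_delta (R : realType) (n : nat) (a : 'I_n) (f : 'I_n -> R) :
  \sum_(v < n) (v == a)%:R * f v = f a.
Proof.
rewrite (bigD1 a) //= eqxx mul1r big1 ?addr0 // => v /negbTE ->.
by rewrite mul0r.
Qed.

Lemma incE (R : realType) (n m : nat) (tl hd : 'I_m -> 'I_n) (g : 'cV[R]_n) e :
  (incidence R tl hd *m g) e ord0 = g (hd e) ord0 - g (tl e) ord0.
Proof.
rewrite mxE; under eq_bigr do rewrite mxE mulrBl.
by rewrite sumrB !sum_delta.
Qed.

Lemma incE2 (R : realType) (n m : nat) (tl hd : 'I_m -> 'I_n) (g : 'cV[R]_n) e :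
  \sum_j incidence R tl hd e j * g j ord0 = g (hd e) ord0 - g (tl e) ord0.
Proof. by have := @incE R n m tl hd g e; rewrite mxE. Qed.

Theorem lemma3p1 (R : realType) (n m : nat) (tl hd : 'I_m -> 'I_n)
  (c : 'I_m -> R) (h : 'cV[R]_n) (w : 'cV[R]_m)
  (Hloop : forall e, tl e != hd e)
  (Hsimple : forall e f,
     [set tl e; hd e] = [set tl f; hd f] :> {set 'I_n} -> e = f)
  (Hc : forall e, 0 < c e)
  (Hh : forall x, 0 < h x ord0)
  (Hw : forall e, 0 <= w e ord0) :
  ((w^T *m condmx_sqrt c *m map_mx Num.norm (incidence R tl hd *m h))
      ord0 ord0) ^+ 2
  <= entropy_I tl hd c h / 2 *
     \sum_(x < n) h x ord0 *
        \sum_(e < m | (x == tl e) || (x == hd e)) w e ord0 ^+ 2.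
Proof.
set D := fun e => h (hd e) ord0 - h (tl e) ord0.
set Dl := fun e => ln (h (hd e) ord0) - ln (h (tl e) ord0).
have LHS : (w^T *m condmx_sqrt c *m map_mx Num.norm (incidence R tl hd *m h))
      ord0 ord0 = \sum_e w e ord0 * Num.sqrt (c e) * `|D e|.
  rewrite /condmx_sqrt mul_mx_diag mxE; apply: eq_bigr => e _.
  by rewrite !mxE incE2.
have ENT : entropy_I tl hd c h = \sum_e D e * c e * Dl e.
  rewrite /entropy_I /laplacian /condmx.
  have -> : h^T *m ((incidence R tl hd)^T *m diag_mx (\row_e c e) *m incidence R tl hd)
      *m map_mx (@ln R) h = (incidence R tl hd *m h)^T *m diag_mx (\row_e c e)
      *m (incidence R tl hd *m map_mx (@ln R) h).
    by rewrite trmx_mul !mulmxA.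
  rewrite mul_mx_diag mxE; apply: eq_bigr => e _.
  by rewrite !mxE !incE2 !mxE.
have SUM : \sum_(x < n) h x ord0 *
        \sum_(e < m | (x == tl e) || (x == hd e)) w e ord0 ^+ 2
      = \sum_e w e ord0 ^+ 2 * (h (tl e) ord0 + h (hd e) ord0).
  under eq_bigr do rewrite mulr_sumr big_mkcond /=.
  rewrite exchange_big /=; apply: eq_bigr => e _.
  transitivity (\sum_(x < n) ((x == tl e)%:R * (w e ord0 ^+ 2 * h x ord0)
      + (x == hd e)%:R * (w e ord0 ^+ 2 * h x ord0))).
    apply: eq_bigr => x _.
    case: (eqVneq x (tl e)) => [->|xt].
      by rewrite (negbTE (Hloop e)) /= mul1r mul0r addr0 mulrC.
    rewrite /= mul0r add0r.
    by case: (x == hd e); rewrite /= ?mul1r ?mul0r // mulrC.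
  by rewrite big_split /= !sum_delta mulrDr.
rewrite LHS ENT SUM.
have -> : (\sum_e D e * c e * Dl e) / 2 *
    \sum_e w e ord0 ^+ 2 * (h (tl e) ord0 + h (hd e) ord0) =
    (\sum_e D e * c e * Dl e) *
    \sum_e (w e ord0 ^+ 2 * (h (tl e) ord0 + h (hd e) ord0) / 2).
  by rewrite -mulr_suml mulrA mulrAC.
apply: cs_aux => e.
- have := @key_sym R _ _ (Hh (hd e)) (Hh (tl e)).
  rewrite -/(D e) -/(Dl e) => K.
  have P0 : 0 <= D e * Dl e.
    have s0 : 0 < h (hd e) ord0 + h (tl e) ord0.
      by apply: addr_gt0; apply: Hh.
    rewrite -(pmulr_lge0 _ s0).
    apply: le_trans K; apply: mulr_ge0 => //; exact: sqr_ge0.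
  rewrite mulrAC; apply: mulr_ge0 => //; exact: ltW.
- apply: divr_ge0 => //; apply: mulr_ge0; first exact: sqr_ge0.
  have := Hh (hd e); have := Hh (tl e); lra.
- have hs : Num.sqrt (c e) ^+ 2 = c e by rewrite sqr_sqrtr // ltW.
  have hn : `|D e| ^+ 2 = D e ^+ 2 by rewrite real_normK // num_real.
  rewrite !exprMn hs hn.
  have := @key_sym R _ _ (Hh (hd e)) (Hh (tl e)).
  rewrite -/(D e) -/(Dl e).
  set W := w e ord0 ^+ 2.
  have W0 : 0 <= W by exact: sqr_ge0.
  have := Hc e.
  move=> ce K.
  have : 0 <= W * c e by apply: mulr_ge0 => //; exact: ltW.
  move=> Wc.
  have -> : D e * c e * Dl e * (W * (h (tl e) ord0 + h (hd e) ord0) / 2)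
    = (W * c e) / 2 * (D e * Dl e * (h (hd e) ord0 + h (tl e) ord0)) by field.
  have -> : W * c e * D e ^+ 2 = (W * c e) / 2 * (2 * D e ^+ 2) by field.
  apply: ler_wpM2l; first lra.
  exact: K.
Qed.
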